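(* Let $m\ge 0$ be an integer, $\mathbf{X}\in\{0,1\}^{(m+1)\times m}$ and $\mathbf{Y}\in\{0,1\}^{m\times(m+1)}$. Then $\mathbb{D}_{1,0}(\mathbf{X})\cap\mathbb{D}_{0,1}(\mathbf{Y})\neq\emptyset$ if and only if $\mathbb{I}_{0,1}(\mathbf{X})\cap\mathbb{I}_{1,0}(\mathbf{Y})\neq\emptyset$.
   Context: For a binary array $\mathbf{X}$, $\mathbb{D}_{t_r,t_c}(\mathbf{X})$ denotes the set of all arrays obtained from $\mathbf{X}$ by deleting any $t_r$ rows and any $t_c$ columns, and $\mathbb{I}_{t_r,t_c}(\mathbf{X})$ the set of all binary arrays obtained from $\mathbf{X}$ by inserting $t_r$ rows and $t_c$ columns (arbitrary binary content, arbitrary positions). *)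

(* Defs.v *)
From mathcomp Require Import all_boot all_algebra.
Set Implicit Arguments. Unset Strict Implicit. Unset Printing Implicit Defensive.

Definition incr (n n' : nat) (f : 'I_n -> 'I_n') : Prop :=
  forall i j : 'I_n, (i < j)%N -> (f i < f j)%N.

(* [deleted tr tc X Z] : Z is obtained from X by deleting (any) tr rows and
   (any) tc columns, i.e. Z belongs to D_{tr,tc}(X). *)
Definition deleted (tr tc : nat) {r c r' c' : nat}
    (X : 'M[bool]_(r, c)) (Z : 'M[bool]_(r', c')) : Prop :=
  r = (r' + tr)%N /\ c = (c' + tc)%N /\
  exists (f : 'I_r' -> 'I_r) (g : 'I_c' -> 'I_c),
    incr f /\ incr g /\ Z = mxsub f g X.

(* [inserted tr tc X W] : W is obtained from X by inserting tr rows and tc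
   columns (arbitrary content and positions), i.e. W belongs to I_{tr,tc}(X);
   equivalently X is obtained from W by deleting those rows/columns. *)
Definition inserted (tr tc : nat) {r c r' c' : nat}
    (X : 'M[bool]_(r, c)) (W : 'M[bool]_(r', c')) : Prop :=
  deleted tr tc W X.

(* Main.v *)
Require Import Defs.
From mathcomp Require Import all_boot all_algebra.
From mathcomp Require Import zify.

Lemma incr_ge n n' (f : 'I_n -> 'I_n') : incr f -> forall i : 'I_n, (i <= f i)%N.
Proof.
move=> If [k]; elim: k => [//|k IH] Hk.
have Hk' : (k < n)%N by apply: ltnW.
have h2 := IH Hk'.
have h1 := If (Ordinal Hk') (Ordinal Hk) (ltnSn k).
exact: leq_ltn_trans h2 h1.
Qed.

Arguments incr_ge {n n' f}.
Lemma incr_inj n n' (f : 'I_n -> 'I_n') : incr f -> injective f.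
Proof.
move=> If i j E; apply/val_inj/eqP; case: (ltngtP i j) => // h.
- by have := If _ _ h; rewrite E ltnn.
- by have := If _ _ h; rewrite E ltnn.
Qed.

Arguments incr_inj {n n' f}.
Lemma incr_id n (f : 'I_n -> 'I_n) : incr f -> f =1 id.
Proof.
move=> If i; apply/val_inj/eqP; rewrite /= eqn_leq incr_ge // andbT.
pose g := fun k => rev_ord (f (rev_ord k)).
have Ig : incr g.
  move=> a b hab; rewrite /g /=.
  have h : (rev_ord b < rev_ord a)%N by rewrite /=; have := ltn_ord b; lia.
  have := If _ _ h; have := ltn_ord (f (rev_ord a)); have := ltn_ord (f (rev_ord b)); lia.
have := incr_ge Ig (rev_ord i); rewrite /g rev_ordK /=.
have := ltn_ord i; have := ltn_ord (f i); lia.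
Qed.

Arguments incr_id {n f}.
Theorem lemma2 (m : nat) (X : 'M[bool]_(m.+1, m)) (Y : 'M[bool]_(m, m.+1)) :
  (exists Z : 'M[bool]_(m, m), deleted 1 0 X Z /\ deleted 0 1 Y Z) <->
  (exists W : 'M[bool]_(m.+1, m.+1), inserted 0 1 X W /\ inserted 1 0 Y W).
Proof.
split.
- move=> [Z [[_ [_ [f [g0 [If [Ig0 EX]]]]]] [_ [_ [f1 [g [If1 [Ig EY]]]]]]]].
  pose W : 'M[bool]_(m.+1, m.+1) := (\matrix_(a, b) match [pick b' | g b' == b] with
              | Some b' => X a b'
              | None => match [pick a' | f a' == a] with
                        | Some a' => Y a' b | None => false end end)%R.
  exists W; split.
  + split; first by rewrite addn0.
    split; first by rewrite addn1.
    exists id, g; split; first by [].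
    split; first exact: Ig.
    apply/matrixP => a b; rewrite !mxE.
    case: pickP => [b' /eqP /(incr_inj Ig) -> // | /(_ b)]; by rewrite eqxx.
  + split; first by rewrite addn1.
    split; first by rewrite addn0.
    exists f, id; split; first exact: If.
    split; first by [].
    apply/matrixP => a b; rewrite !mxE.
    case: pickP => [b' /eqP Eb | _].
    * have E1 : Z a b' = X (f a) b' by rewrite EX mxE (incr_id Ig0).
      have E2 : Z a b' = Y a (g b') by rewrite EY mxE (incr_id If1).
      by rewrite -Eb -E1 E2.
    * case: pickP => [a' /eqP /(incr_inj If) -> // | /(_ a)]; by rewrite eqxx.
- move=> [W [[_ [_ [f0 [g [If0 [Ig EX]]]]]] [_ [_ [f [g0 [If [Ig0 EY]]]]]]]].
  exists (mxsub f g W); split.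
  + split; first by rewrite addn1.
    split; first by rewrite addn0.
    exists f, id; split; first exact: If.
    split; first by [].
    by apply/matrixP => a b; rewrite EX !mxE (incr_id If0).
  + split; first by rewrite addn0.
    split; first by rewrite addn1.
    exists id, g; split; first by [].
    split; first exact: Ig.
    by apply/matrixP => a b; rewrite EY !mxE (incr_id Ig0).
Qed.
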